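(* Let $\langle D,E,e,\varepsilon\rangle$ be a restricted Priestley duality between a variety $\mathcal A$ and a category $\mathcal X$. Let $\mathbb X_1,\mathbb X_2,\mathbb Y\in\mathcal X$ and set $\mathbf A_1:=E(\mathbb X_1)$, $\mathbf A_2:=E(\mathbb X_2)$. (1) Let $\phi_1\colon\mathbb X_1\to\mathbb Y$, $\phi_2\colon\mathbb X_2\to\mathbb Y$ be jointly $\mathcal P$-surjective morphisms. Then $B(\phi_1,\phi_2):=\{(\alpha\circ\phi_1^\flat,\alpha\circ\phi_2^\flat)\mid \alpha\in\mathcal P(\mathbb Y^\flat,\mathbbm 2)\}\subseteq \mathcal P(\mathbb X_1^\flat,\mathbbm 2)\times\mathcal P(\mathbb X_2^\flat,\mathbbm 2)$ is the universe of a subalgebra $\mathbf B(\phi_1,\phi_2)$ of $\mathbf A_1\times\mathbf A_2$, and the map $\alpha\mapsto(\alpha\circ\phi_1^\flat,\alpha\circ\phi_2^\flat)$ is an isomorphism from $E(\mathbb Y)$ onto $\mathbf B(\phi_1,\phi_2)$. (2) Let $\mathbf B$ be a subalgebra of $\mathbf A_1\times\mathbf A_2$, let $\mathbb Y:=D(\mathbf B)$, and for $i\in\{1,2\}$ let $\rho_i\colon\mathbf B\to\mathbf A_i$ be the projection and $\varphi_i:=D(\rho_i)\circ\varepsilon_{\mathbb X_i}\colon\mathbb X_i\to\mathbb Y$. Then $\varphi_1,\varphi_2$ are jointly $\mathcal P$-surjective and $B=B(\varphi_1,\varphi_2)$. (3) If $\phi_1\colon\mathbb X_1\to\mathbb Y$,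 $\phi_2\colon\mathbb X_2\to\mathbb Y$ are jointly $\mathcal P$-surjective, then $B(\phi_1,\phi_2)=B_1\times B_2$ for some subalgebras $\mathbf B_1$ of $\mathbf A_1$ and $\mathbf B_2$ of $\mathbf A_2$ if and only if $\mathbb Y^\flat=\phi_1^\flat(\mathbb X_1^\flat)\,\dot\cup\,\phi_2^\flat(\mathbb X_2^\flat)$. (4) If $\phi_1\colon\mathbb X_1\to\mathbb Y$, $\phi_2\colon\mathbb X_2\to\mathbb Y$ are jointly $\mathcal P$-surjective, then $B(\phi_1,\phi_2)$ is the graph of a one-to-one partial map from $A_1$ to $A_2$ if and only if both $\phi_1$ and $\phi_2$ are $\mathcal P$-surjective. Moreover, if $\mathbb X_1=\mathbb X_2$ (so $\mathbf A:=\mathbf A_1=\mathbf A_2$), then $B(\phi_1,\phi_2)$ is the graph of an identity map on a subset of $A$ if and only if $\phi_1=\phi_2$.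
   Context: $\mathcal D$: bounded distributive lattices; $\mathcal P$: Priestley spaces with continuous order-preserving maps; $\mathbf 2$ the two-element bounded lattice, $\mathbbm 2$ the discrete two-element chain. Priestley duality: $H(\mathbf L)=\mathcal D(\mathbf L,\mathbf 2)$ (order and topology from $\mathbbm 2^L$), $K(\mathbb X)=\mathcal P(\mathbb X,\mathbbm 2)$ (pointwise operations), morphisms by precomposition, unit $e$ and counit $\varepsilon$ given by evaluation. A restricted Priestley duality $\langle D,E,e,\varepsilon\rangle$: $\mathcal A$ is a variety with a term reduct in $\mathcal D$ and forgetful functor ${}^\flat\colon\mathcal A\to\mathcal D$; $\mathcal X$ is a category with a functor ${}^\flat\colon\mathcal X\to\mathcal P$; $D\colon\mathcal A\to\mathcal X$, $E\colon\mathcal X\to\mathcal A$ form a dual equivalence with unit $e\colon\mathrm{id}\to ED$ and counit $\varepsilon\colon\mathrm{id}\to DE$, such that ${}^\flat\circ D=H\circ{}^\flat$, ${}^\flat\circ E=K\circ{}^\flat$ (so the underlying set of $E(\mathbb X)$ is $\mathcal P(\mathbb X^\flat,\mathbbm 2)$), $e_{\mathbf A}^\flat=e_{\mathbf A^\flat}$ and $\varepsilon_{\mathbb X}^\flat=\varepsilon_{\mathbb X^\flat}$. A morphism $\phi$ of $\mathcal X$ is $\mathcal P$-surjective if $\phi^\flat$ is surjective; $\phi_1,\phi_2$ with common codomain $\mathbb Y$ are jointly $\mathcal P$-surjective if the images of $\phi_1^\flat,\phi_2^\flat$ together cover $\mathbb Y^\flat$. $\mathbb Y^\flat=\phi_1^\flat(\mathbb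 X_1^\flat)\,\dot\cup\,\phi_2^\flat(\mathbb X_2^\flat)$ means the two images are disjoint, cover $\mathbb Y^\flat$, and no element of one is comparable to one of the other. *)

(* Defs.v *)
From mathcomp Require Import all_boot.
From Stdlib Require Import FunctionalExtensionality.
From Stdlib Require List.
From Stdlib Require Import ProofIrrelevance.
Set Implicit Arguments.
Unset Strict Implicit.
Unset Printing Implicit Defensive.

Record Priestley := {
  pcar :> Type;
  ple : pcar -> pcar -> Prop;
  popen : (pcar -> Prop) -> Prop;
  ple_refl : forall x, ple x x;
  ple_trans : forall x y z, ple x y -> ple y z -> ple x z;
  ple_anti : forall x y, ple x y -> ple y x -> x = y;
  popen_full : popen (fun _ => True);
  popen_inter : forall U W, popen U -> popen W -> popen (fun x => U x /\ W x);
  popen_union : forall F : (pcar -> Prop) -> Prop,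
      (forall U, F U -> popen U) -> popen (fun x => exists U, F U /\ U x);
  pcompact : forall (I : Type) (U : I -> pcar -> Prop),
      (forall i, popen (U i)) -> (forall x, exists i, U i x) ->
      exists s : seq I, forall x, exists i, List.In i s /\ U i x;
  psep : forall x y, ~ ple x y ->
      exists U, popen U /\ popen (fun z => ~ U z) /\
        (forall a b, ple a b -> U a -> U b) /\ U x /\ ~ U y
}.
Arguments ple {p} _ _.
Arguments popen {p} _.

Record pmorph (X Y : Priestley) := {
  pfun :> X -> Y;
  pmono : forall x x', ple x x' -> ple (pfun x) (pfun x');
  pcont : forall U : Y -> Prop, popen U -> popen (fun x => U (pfun x))
}.

(* P(X, 2): continuous order-preserving maps into the discrete
   two-element chain (false < true). Continuity into a discrete space:
   the preimage of every subset is open. *)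
Definition is_p2 (X : Priestley) (al : X -> bool) : Prop :=
  (forall x y, ple x y -> al x -> al y) /\
  (forall S : bool -> Prop, popen (fun x => S (al x))).

Definition P2 (X : Priestley) := {al : X -> bool | is_p2 al}.

Lemma precomp_p2 (X Y : Priestley) (f : pmorph X Y) (al : P2 Y) :
  is_p2 (fun x => sval al (f x)).
Proof.
case: al => a [Ha1 Ha2]; split => /=.
- by move=> x y Hxy; apply: Ha1; apply: pmono.
- by move=> S; exact: (pcont f (Ha2 S)).
Qed.

Definition precomp (X Y : Priestley) (f : pmorph X Y) (al : P2 Y) : P2 X :=
  exist _ (fun x => sval al (f x)) (precomp_p2 f al).

Record category := {
  Obj : Type;
  Hom : Obj -> Obj -> Type;
  idm : forall X, Hom X X;
  compose : forall X Y Z, Hom Y Z -> Hom X Y -> Hom X Z;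
  comp_assoc : forall W X Y Z (h : Hom Y Z) (g : Hom X Y) (f : Hom W X),
      compose h (compose g f) = compose (compose h g) f;
  comp_idl : forall X Y (f : Hom X Y), compose (idm Y) f = f;
  comp_idr : forall X Y (f : Hom X Y), compose f (idm X) = f;
  flat : Obj -> Priestley;
  flatm : forall X Y, Hom X Y -> pmorph (flat X) (flat Y);
  flat_id : forall X x, flatm (idm X) x = x;
  flat_comp : forall X Y Z (g : Hom Y Z) (f : Hom X Y) x,
      flatm (compose g f) x = flatm g (flatm f x)
}.
Arguments Hom {c} _ _.
Arguments idm {c} _.
Arguments compose {c X Y Z} _ _.
Arguments flat {c} _.
Arguments flatm {c X Y} _.

Record signature := { sym : Type; ar : sym -> nat }.

Record algebra (S : signature) := {
  car :> Type;
  interp : forall o : sym S, ('I_(ar o) -> car) -> car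
}.
Arguments interp {S} _ _ _.

Inductive term (S : signature) : Type :=
| Var : nat -> term S
| App : forall o : sym S, ('I_(ar o) -> term S) -> term S.

Fixpoint eval (S : signature) (A : algebra S) (v : nat -> A) (t : term S) : A :=
  match t with
  | Var n => v n
  | App o args => interp A o (fun i => @eval S A v (args i))
  end.
Arguments eval {S} A v t.

Fixpoint vars_in (S : signature) (P : nat -> Prop) (t : term S) : Prop :=
  match t with
  | Var n => P n
  | App o args => forall i, @vars_in S P (args i)
  end.
Arguments vars_in {S} P t.

Definition model_of (S : signature) (Eqs : term S -> term S -> Prop)
  (A : algebra S) : Prop :=
  forall t u, Eqs t u -> forall v : nat -> A, eval A v t = eval A v u.

Definition bin_op (S : signature) (A : algebra S) (t : term S) (a b : A) : A :=
  eval A (fun n => if n is 0 then a else b) t.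
Arguments bin_op {S} A t a b.

Definition is_bdl (T : Type) (m j : T -> T -> T) (bot top : T) : Prop :=
  (forall x y z, m x (m y z) = m (m x y) z) /\
  (forall x y z, j x (j y z) = j (j x y) z) /\
  (forall x y, m x y = m y x) /\
  (forall x y, j x y = j y x) /\
  (forall x y, m x (j x y) = x) /\
  (forall x y, j x (m x y) = x) /\
  (forall x y z, m x (j y z) = j (m x y) (m x z)) /\
  (forall x, j x bot = x) /\
  (forall x, m x top = x).

(* A variety (given by a set of identities) with a term reduct in D:
   binary terms for meet/join (in variables 0,1) and closed terms for
   0/1 such that every member is a bounded distributive lattice. *)
Record variety (S : signature) := {
  Eqs : term S -> term S -> Prop;
  tmeet : term S; tjoin : term S; tbot : term S; ttop : term S;
  tmeet_vars : vars_in (fun n => n = 0 \/ n = 1) tmeet;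
  tjoin_vars : vars_in (fun n => n = 0 \/ n = 1) tjoin;
  tbot_closed : vars_in (fun _ => False) tbot;
  ttop_closed : vars_in (fun _ => False) ttop;
  reduct_bdl : forall A : algebra S, model_of Eqs A ->
      forall v : nat -> A,
        is_bdl (bin_op A tmeet) (bin_op A tjoin) (eval A v tbot) (eval A v ttop)
}.

Record member (S : signature) (V : variety S) := {
  malg :> algebra S;
  mmodel : model_of (Eqs V) malg
}.

Definition is_hom (S : signature) (A B : algebra S) (f : A -> B) : Prop :=
  forall o (args : 'I_(ar o) -> A), f (interp A o args) = interp B o (fun i => f (args i)).

Definition hom_alg (S : signature) (A B : algebra S) := {f : A -> B | is_hom f}.

Definition bdl_hom (S : signature) (V : variety S) (A : algebra S) (h : A -> bool) : Prop :=
  (forall a b, h (bin_op A (tmeet V) a b) = h a && h b) /\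
  (forall a b, h (bin_op A (tjoin V) a b) = h a || h b) /\
  (forall v, h (eval A v (tbot V)) = false) /\
  (forall v, h (eval A v (ttop V)) = true).

(* open sets of the product topology on 2^A (2 discrete) *)
Definition prod_open (A : Type) (W : (A -> bool) -> Prop) : Prop :=
  forall f, W f -> exists s : seq (A * bool),
    (forall p, List.In p s -> f p.1 = p.2) /\
    (forall g, (forall p, List.In p s -> g p.1 = p.2) -> W g).

Definition prod_alg (S : signature) (A B : algebra S) : algebra S :=
  {| car := (A * B)%type;
     interp := fun o args => (interp A o (fun i => (args i).1),
                              interp B o (fun i => (args i).2)) |}.

Definition subuniverse (S : signature) (A : algebra S) (B : A -> Prop) : Prop :=
  forall o (args : 'I_(ar o) -> A), (forall i, B (args i)) -> B (interp A o args).

Definition is_subalgebra (S : signature) (A : algebra S) (B : A -> Prop) : Prop :=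
  (exists a, B a) /\ subuniverse B.

Definition subalg (S : signature) (A : algebra S) (B : A -> Prop)
  (HB : subuniverse B) : algebra S :=
  {| car := {a : A | B a};
     interp := fun o args =>
       exist _ (interp A o (fun i => sval (args i)))
             (HB o _ (fun i => proj2_sig (args i))) |}.

Lemma eval_prod (S : signature) (A B : algebra S) v (t : term S) :
  eval (prod_alg A B) v t = (eval A (fun n => (v n).1) t, eval B (fun n => (v n).2) t).
Proof.
elim: t => [n|o args IH] /=; first by case: (v n).
have E1 : (fun i => (eval (prod_alg A B) v (args i)).1) =
          (fun i => eval A (fun n => (v n).1) (args i)).
  by apply: functional_extensionality => i; rewrite IH.
have E2 : (fun i => (eval (prod_alg A B) v (args i)).2) =
          (fun i => eval B (fun n => (v n).2) (args i)).
  by apply: functional_extensionality => i; rewrite IH.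
by rewrite E1 E2.
Qed.

Lemma eval_sub (S : signature) (A : algebra S) (B : A -> Prop) (HB : subuniverse B)
  v (t : term S) : sval (eval (subalg HB) v t) = eval A (fun n => sval (v n)) t.
Proof.
elim: t => [n|o args IH] //=.
have E : (fun i => sval (eval (subalg HB) v (args i))) =
         (fun i => eval A (fun n => sval (v n)) (args i)).
  by apply: functional_extensionality => i; rewrite IH.
by rewrite E.
Qed.

Lemma model_prod (S : signature) (Eq : term S -> term S -> Prop) (A B : algebra S) :
  model_of Eq A -> model_of Eq B -> model_of Eq (prod_alg A B).
Proof.
move=> HA HB t u Htu v; rewrite !eval_prod.
by rewrite (HA t u Htu) (HB t u Htu).
Qed.

Lemma model_sub (S : signature) (Eq : term S -> term S -> Prop) (A : algebra S)
  (B : A -> Prop) (HB : subuniverse B) : model_of Eq A -> model_of Eq (subalg HB).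
Proof.
move=> HA t u Htu v; apply: eq_sig_hprop.
  by move=> x p q; apply: proof_irrelevance.
by rewrite !eval_sub (HA t u Htu).
Qed.

Arguments mmodel {S V} m.
Arguments malg {S V} m.
Arguments bdl_hom {S} V A h.
Arguments is_hom {S} A B f.
Arguments model_sub {S Eq A B} HB _.
Arguments model_prod {S Eq A B} _ _.
Arguments subalg {S A B} HB.

Unset Implicit Arguments.
Definition sub_member (S : signature) (V : variety S) (A1 A2 : member V)
  (B : prod_alg A1 A2 -> Prop) (HB : subuniverse B) : member V :=
  {| malg := subalg HB;
     mmodel := model_sub HB (model_prod (mmodel A1) (mmodel A2)) |}.

Definition rho1 (S : signature) (A1 A2 : algebra S) (B : prod_alg A1 A2 -> Prop)
  (HB : subuniverse B) : hom_alg (subalg HB) A1 :=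
  exist (fun f : subalg HB -> _ => is_hom (subalg HB) _ f) (fun p : subalg HB => (sval p).1) (fun o args => erefl).
Definition rho2 (S : signature) (A1 A2 : algebra S) (B : prod_alg A1 A2 -> Prop)
  (HB : subuniverse B) : hom_alg (subalg HB) A2 :=
  exist (fun f : subalg HB -> _ => is_hom (subalg HB) _ f) (fun p : subalg HB => (sval p).2) (fun o args => erefl).

(* The functor E on objects: E(X) has universe P(X^flat, 2); only the
   interpretation of the fundamental operations is data. *)
Definition Eops_type (S : signature) (C : category) :=
  forall (X : Obj C) (o : sym S), ('I_(ar o) -> P2 (flat X)) -> P2 (flat X).

Definition Ealg_of (S : signature) (C : category) (Eo : Eops_type S C) (X : Obj C)
  : algebra S := {| car := P2 (flat X); interp := Eo X |}.
Arguments Ealg_of {S C} Eo X.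

Record RPD (S : signature) (V : variety S) (C : category) := {
  D : member V -> Obj C;
  Dmor : forall A B : member V, hom_alg A B -> Hom (D B) (D A);
  Dmor_id : forall (A : member V) (f : hom_alg A A),
      (forall a, sval f a = a) -> Dmor A A f = idm (D A);
  Dmor_comp : forall (A B Z : member V) (f : hom_alg A B) (g : hom_alg B Z)
      (h : hom_alg A Z), (forall a, sval h a = sval g (sval f a)) ->
      Dmor A Z h = compose (Dmor A B f) (Dmor B Z g);
  (* E : X -> A; flat o E = K o flat *)
  Eops : Eops_type S C;
  E_in : forall X, model_of (Eqs V) (Ealg_of Eops X);
  E_meet : forall X (a b : P2 (flat X)) x,
      sval (bin_op (Ealg_of Eops X) (tmeet V) a b) x = sval a x && sval b x;
  E_join : forall X (a b : P2 (flat X)) x,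
      sval (bin_op (Ealg_of Eops X) (tjoin V) a b) x = sval a x || sval b x;
  E_bot : forall X v x, sval (eval (Ealg_of Eops X) v (tbot V)) x = false;
  E_top : forall X v x, sval (eval (Ealg_of Eops X) v (ttop V)) x = true;
  E_hom : forall X Y (phi : Hom X Y),
      is_hom (Ealg_of Eops Y) (Ealg_of Eops X) (precomp (flatm phi));
  (* flat o D = H o flat: D(A)^flat is identified, via kappa_A, with
     the Priestley space D(A^flat, 2) (order and topology from 2^A). *)
  kappa : forall A : member V, flat (D A) -> A -> bool;
  kappa_inj : forall A y y', kappa A y = kappa A y' -> y = y';
  kappa_img : forall (A : member V) (h : A -> bool),
      bdl_hom V A h <-> exists y, kappa A y = h;
  kappa_ord : forall A y y', ple y y' <-> (forall a, kappa A y a -> kappa A y' a);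
  kappa_top : forall A (U : flat (D A) -> Prop),
      popen U <-> exists W, prod_open W /\ (forall y, U y <-> W (kappa A y));
  Dmor_flat : forall (A B : member V) (f : hom_alg A B) y a,
      kappa A (flatm (Dmor A B f) y) a = kappa B y (sval f a);
  (* unit e : id -> ED, natural isomorphism with e_A^flat = e_{A^flat} *)
  e : forall A : member V, hom_alg A (Ealg_of Eops (D A));
  e_bij : forall A, bijective (sval (e A));
  e_flat : forall (A : member V) a y, sval (sval (e A) a) y = kappa A y a;
  e_nat : forall (A B : member V) (f : hom_alg A B) a,
      sval (e B) (sval f a) = precomp (flatm (Dmor A B f)) (sval (e A) a);
  (* counit eps : id -> DE, natural isomorphism with eps^flat = eps_{X^flat} *)
  eps : forall X, Hom X (D {| malg := Ealg_of Eops X; mmodel := E_in X |});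
  eps_iso : forall X, exists g, compose g (eps X) = idm X /\ compose (eps X) g = idm _;
  eps_flat : forall X (x : flat X) (al : P2 (flat X)),
      kappa {| malg := Ealg_of Eops X; mmodel := E_in X |} (flatm (eps X) x) al
        = sval al x;
  eps_nat : forall X Y (phi : Hom X Y),
      compose (Dmor {| malg := Ealg_of Eops Y; mmodel := E_in Y |}
                 {| malg := Ealg_of Eops X; mmodel := E_in X |}
                 (exist _ (precomp (flatm phi)) (E_hom X Y phi))) (eps X)
      = compose (eps Y) phi
}.

Arguments RPD {S} V C.
Arguments D {S V C} r A.
Arguments Dmor {S V C} r {A B} f.
Arguments eps {S V C} r X.
Arguments Eops {S V C} r X o _.
Arguments E_in {S V C} r X.
Arguments kappa {S V C} r A _ _.
Arguments e {S V C} r A.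

Definition Ealg (S : signature) (V : variety S) (C : category) (R : RPD V C)
  (X : Obj C) : algebra S := Ealg_of (Eops R) X.
Definition Emem (S : signature) (V : variety S) (C : category) (R : RPD V C)
  (X : Obj C) : member V := {| malg := Ealg_of (Eops R) X; mmodel := E_in R X |}.
Arguments Ealg {S V C} R X.
Arguments Emem {S V C} R X.

Definition Bset (C : category) (X1 X2 Y : Obj C) (phi1 : Hom X1 Y) (phi2 : Hom X2 Y)
  (p : P2 (flat X1) * P2 (flat X2)) : Prop :=
  exists al : P2 (flat Y), p = (precomp (flatm phi1) al, precomp (flatm phi2) al).

Definition Bmap (C : category) (X1 X2 Y : Obj C) (phi1 : Hom X1 Y) (phi2 : Hom X2 Y)
  (al : P2 (flat Y)) : P2 (flat X1) * P2 (flat X2) :=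
  (precomp (flatm phi1) al, precomp (flatm phi2) al).

Definition P_surj (C : category) (X Y : Obj C) (phi : Hom X Y) : Prop :=
  forall y : flat Y, exists x, flatm phi x = y.

Definition jointly_P_surj (C : category) (X1 X2 Y : Obj C)
  (phi1 : Hom X1 Y) (phi2 : Hom X2 Y) : Prop :=
  forall y : flat Y, (exists x, flatm phi1 x = y) \/ (exists x, flatm phi2 x = y).

Definition ordered_disjoint_union (C : category) (X1 X2 Y : Obj C)
  (phi1 : Hom X1 Y) (phi2 : Hom X2 Y) : Prop :=
  let I1 := fun y => exists x, flatm phi1 x = y in
  let I2 := fun y => exists x, flatm phi2 x = y in
  (forall y, I1 y \/ I2 y) /\ (forall y, ~ (I1 y /\ I2 y)) /\
  (forall y1 y2, I1 y1 -> I2 y2 -> ~ ple y1 y2 /\ ~ ple y2 y1).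

Definition injective_partial_map_graph (T U : Type) (G : T * U -> Prop) : Prop :=
  (forall a b b', G (a, b) -> G (a, b') -> b = b') /\
  (forall a a' b, G (a, b) -> G (a', b) -> a = a').

Arguments Bset {C X1 X2 Y} phi1 phi2 p.
Arguments Bmap {C X1 X2 Y} phi1 phi2 al.
Arguments P_surj {C X Y} phi.
Arguments jointly_P_surj {C X1 X2 Y} phi1 phi2.
Arguments ordered_disjoint_union {C X1 X2 Y} phi1 phi2.
Arguments injective_partial_map_graph {T U} G.
Arguments sub_member {S V} A1 A2 B HB.
Arguments rho1 {S A1 A2 B} HB.
Arguments rho2 {S A1 A2 B} HB.
Arguments is_subalgebra {S} A B.

(* Main.v *)
Require Import Defs.
From mathcomp Require Import all_boot.
From Stdlib Require Import Classical ClassicalEpsilon FunctionalExtensionality PropExtensionality ProofIrrelevance.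
From Stdlib Require List.
Set Implicit Arguments. Unset Strict Implicit. Unset Printing Implicit Defensive.

Lemma P2_ext (X : Priestley) (a b : P2 X) : (forall x, sval a x = sval b x) -> a = b.
Proof.
case: a b => [a Ha] [b Hb] /= H.
have E : a = b by apply: functional_extensionality.
subst b. by rewrite (proof_irrelevance _ Ha Hb).
Qed.

Lemma popen_ext (X : Priestley) (U W : X -> Prop) :
  popen U -> (forall x, U x <-> W x) -> popen W.
Proof.
move=> HU H.
have -> : W = U; last done.
apply: functional_extensionality => x; apply: propositional_extensionality.
by case: (H x) => h1 h2; split.
Qed.

Lemma popen_empty (X : Priestley) : popen (fun _ : X => False).
Proof.
apply: (popen_ext (popen_union (F := fun _ => False) _)) => //.
by move=> x; split => //; case=> ? [].
Qed.

Lemma popen_const (X : Priestley) (P : Prop) : popen (fun _ : X => P).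
Proof.
case: (classic P) => HP.
  by apply: (popen_ext (popen_full X)) => x; split.
by apply: (popen_ext (popen_empty X)) => x; split.
Qed.

Lemma popen_or (X : Priestley) (U W : X -> Prop) :
  popen U -> popen W -> popen (fun x => U x \/ W x).
Proof.
move=> HU HW.
apply: (popen_ext (popen_union (F := fun Z => Z = U \/ Z = W) _)).
  by move=> Z [->|->].
move=> x; split.
  by case=> Z [[->|->] h]; [left|right].
by case=> h; [exists U | exists W]; split => //; [left|right].
Qed.

Definition bdec (P : Prop) : bool := if excluded_middle_informative P then true else false.

Lemma bdecT (P : Prop) : P -> bdec P = true.
Proof. by rewrite /bdec; case: excluded_middle_informative. Qed.
Lemma bdecF (P : Prop) : ~ P -> bdec P = false.
Proof. by rewrite /bdec; case: excluded_middle_informative. Qed.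

Lemma mk_p2_proof (X : Priestley) (U : X -> Prop) :
  popen U -> popen (fun x => ~ U x) -> (forall a b, ple a b -> U a -> U b) ->
  is_p2 (fun x => bdec (U x)).
Proof.
move=> HU HnU Hup; split.
  move=> x y Hxy; case: (classic (U x)) => Hx; first by rewrite (bdecT (Hup _ _ Hxy Hx)).
  by rewrite bdecF.
move=> Sp.
apply: (popen_ext (popen_or (popen_inter HU (popen_const X (Sp true)))
                            (popen_inter HnU (popen_const X (Sp false))))).
move=> x; case: (classic (U x)) => Hx.
  rewrite bdecT //; split; first by case=> [][].
  by move=> h; left.
rewrite bdecF //; split; first by case=> [][].
by move=> h; right.
Qed.

Definition mk_p2 (X : Priestley) (U : X -> Prop) (HU : popen U)
  (HnU : popen (fun x => ~ U x)) (Hup : forall a b, ple a b -> U a -> U b) : P2 X :=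
  exist _ _ (mk_p2_proof HU HnU Hup).

Lemma const_p2_proof (X : Priestley) (b : bool) : is_p2 (fun _ : X => b).
Proof. by split => // Sp; apply: popen_const. Qed.

Definition constP2 (X : Priestley) (b : bool) : P2 X := exist _ _ (const_p2_proof X b).

Definition Vc (T X : Type) (h : T -> bool) (pi : T -> X -> bool) (b : T) (x : X) : Prop :=
  (h b = true /\ pi b x = false) \/ (h b = false /\ pi b x = true).

Lemma fold_cover (T X : Type) (mt jn : T -> T -> T) (tp bt : T) (h : T -> bool)
  (pi : T -> X -> bool) :
  (forall a b, h (mt a b) = h a && h b) -> (forall a b, h (jn a b) = h a || h b) ->
  h tp = true -> h bt = false ->
  (forall a b x, pi (mt a b) x = pi a x && pi b x) ->
  (forall a b x, pi (jn a b) x = pi a x || pi b x) ->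
  (forall x, pi tp x = true) -> (forall x, pi bt x = false) ->
  forall s : seq T, exists m j, h m = true /\ h j = false /\
    forall x, (exists b, List.In b s /\ Vc h pi b x) -> pi m x = false \/ pi j x = true.
Proof.
move=> hm hj ht hb pm pj pt pb; elim=> [|b s [m [j [Hm [Hj IH]]]]].
  by exists tp, bt; do 2 split => //; move=> x [b [[]]].
case Hb: (h b).
  exists (mt m b), j; rewrite hm Hm Hb; do 2 split => //.
  move=> x [c [[<-|Hc] HV]].
    left; rewrite pm; case: HV => [[_ ->]|[]]; [by rewrite andbF | by rewrite Hb].
  case: (IH x); [by exists c | by move=> E; left; rewrite pm E | by right].
exists m, (jn j b); rewrite hj Hj Hb; do 2 split => //.
move=> x [c [[<-|Hc] HV]].
  right; rewrite pj; case: HV => [[]|[_ ->]]; [by rewrite Hb | by rewrite orbT].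
case: (IH x); [by exists c | by left | by move=> E; right; rewrite pj E].
Qed.

Lemma compact_sep (X : Priestley) (T : Type) (mt jn : T -> T -> T) (tp bt : T)
  (h : T -> bool) (pi : T -> X -> bool) :
  (forall a b, h (mt a b) = h a && h b) -> (forall a b, h (jn a b) = h a || h b) ->
  h tp = true -> h bt = false ->
  (forall a b x, pi (mt a b) x = pi a x && pi b x) ->
  (forall a b x, pi (jn a b) x = pi a x || pi b x) ->
  (forall x, pi tp x = true) -> (forall x, pi bt x = false) ->
  (forall b, popen (fun x => Vc h pi b x)) ->
  (forall x, exists b, Vc h pi b x) ->
  exists m j, h m = true /\ h j = false /\ forall x, pi m x = false \/ pi j x = true.
Proof.
move=> hm hj ht hb pm pj pt pb Hop Hcov.
have [s Hs] := pcompact Hop Hcov.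
have [m [j [Hm [Hj H]]]] := fold_cover hm hj ht hb pm pj pt pb s.
by exists m, j; split => //; split => // x; apply: H.
Qed.

Lemma sig_ext (T : Type) (P : T -> Prop) (a b : {x | P x}) : sval a = sval b -> a = b.
Proof.
case: a b => [a Ha] [b Hb] /= E; subst b. by rewrite (proof_irrelevance _ Ha Hb).
Qed.

Lemma sep_image (S : signature) (V : variety S) (C : category) (R : RPD V C) (Y : Obj C)
  (X : Priestley) (f : pmorph X (flat Y)) (y : flat Y) :
  (forall x, f x <> y) ->
  exists a a' : P2 (flat Y), (forall x, sval a (f x) = sval a' (f x)) /\
    sval a y = true /\ sval a' y = false.
Proof.
move=> Hf.
pose mt (a b : P2 (flat Y)) : P2 (flat Y) := bin_op (Ealg_of (Eops R) Y) (tmeet V) a b.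
pose jn (a b : P2 (flat Y)) : P2 (flat Y) := bin_op (Ealg_of (Eops R) Y) (tjoin V) a b.
have := @compact_sep X (P2 (flat Y)) mt jn (constP2 _ true) (constP2 _ false)
  (fun a => sval a y) (fun a x => sval a (f x)).
case.
- by move=> a b; rewrite /mt E_meet.
- by move=> a b; rewrite /jn E_join.
- by [].
- by [].
- by move=> a b x; rewrite /mt E_meet.
- by move=> a b x; rewrite /jn E_join.
- by [].
- by [].
- move=> b; exact: (proj2 (proj2_sig (precomp f b))
     (fun t => (sval b y = true /\ t = false) \/ (sval b y = false /\ t = true))).
- move=> x; have Hne := Hf x.
  case: (classic (ple (f x) y)) => Hle.
    have Hnle : ~ ple y (f x) by move=> H; apply: Hne; apply: ple_anti.
    have [U [HU [HnU [Hup [Uy Ufx]]]]] := psep Hnle.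
    by exists (mk_p2 HU HnU Hup); left; rewrite /= bdecT // bdecF.
  have [U [HU [HnU [Hup [Ufx Uy]]]]] := psep Hle.
  by exists (mk_p2 HU HnU Hup); right; rewrite /= bdecF // bdecT.
move=> m [j [Hm [Hj H]]].
exists (jn m j), j; split; last by rewrite /jn E_join Hm.
by move=> x; rewrite /jn E_join; case: (H x) => ->; rewrite ?orbT.
Qed.

Lemma flat_faithful (S : signature) (V : variety S) (C : category) (R : RPD V C)
  (X Y : Obj C) (phi1 phi2 : Hom X Y) :
  (forall x, flatm phi1 x = flatm phi2 x) -> phi1 = phi2.
Proof.
move=> H.
have [g [Hg1 Hg2]] := eps_iso _ _ _ R Y.
rewrite -[phi1]comp_idl -[phi2]comp_idl -Hg1 -!comp_assoc -!eps_nat.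
have Ep : precomp (flatm phi1) = precomp (flatm phi2).
  by apply: functional_extensionality => al; apply: P2_ext => x /=; rewrite H.
move: (E_hom _ _ _ R X Y phi1) (E_hom _ _ _ R X Y phi2); rewrite Ep => p1 p2.
by rewrite (proof_irrelevance _ p1 p2).
Qed.

Lemma image_subalg (S : signature) (V : variety S) (C : category) (R : RPD V C)
  (X Y : Obj C) (phi : Hom X Y) :
  is_subalgebra (Ealg R X) (fun a => exists al : P2 (flat Y), a = precomp (flatm phi) al).
Proof.
split; first by exists (precomp (flatm phi) (constP2 _ false)), (constP2 _ false).
move=> o args Hargs.
pose al i := proj1_sig (constructive_indefinite_description _ (Hargs i)).
have Ha : forall i, args i = precomp (flatm phi) (al i).
  by move=> i; rewrite /al; case: constructive_indefinite_description.
have -> : args = fun i => precomp (flatm phi) (al i) by apply: functional_extensionality.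
exists (interp (Ealg R Y) o al); symmetry; exact: (E_hom _ _ _ R X Y phi o al).
Qed.

Lemma part1 (S : signature) (V : variety S) (C : category) (R : RPD V C)
  (X1 X2 Y : Obj C) (phi1 : Hom X1 Y) (phi2 : Hom X2 Y) :
  jointly_P_surj phi1 phi2 ->
  is_subalgebra (prod_alg (Ealg R X1) (Ealg R X2)) (Bset phi1 phi2) /\
  is_hom (Ealg R Y) (prod_alg (Ealg R X1) (Ealg R X2)) (Bmap phi1 phi2) /\
  injective (Bmap phi1 phi2) /\
  (forall p, Bset phi1 phi2 p <-> exists al, Bmap phi1 phi2 al = p).
Proof.
move=> Hj.
have Hhom : is_hom (Ealg R Y) (prod_alg (Ealg R X1) (Ealg R X2)) (Bmap phi1 phi2).
  by move=> o args; rewrite /Bmap /=; congr pair; apply: (E_hom _ _ _ R).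
split; last split => //; last split.
- split; first by exists (Bmap phi1 phi2 (constP2 _ false)), (constP2 _ false).
  move=> o args Hargs.
  pose al i := proj1_sig (constructive_indefinite_description _ (Hargs i)).
  have Ha : forall i, args i = Bmap phi1 phi2 (al i).
    by move=> i; rewrite /al; case: constructive_indefinite_description.
  have -> : args = fun i => Bmap phi1 phi2 (al i) by apply: functional_extensionality.
  exists (interp (Ealg R Y) o al); exact: (esym (Hhom o al)).
- move=> a b; rewrite /Bmap => -[H1 H2]; apply: P2_ext => z.
  case: (Hj z) => [[x <-]|[x <-]].
    have := f_equal (fun q => q x) H1; by [].
  have := f_equal (fun q => q x) H2; by [].
- by move=> p; split; case=> al E; exists al.
Qed.

Lemma open_part (S : signature) (V : variety S) (C : category) (R : RPD V C) (Y : Obj C)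
  (X1 X2 : Priestley) (f1 : pmorph X1 (flat Y)) (f2 : pmorph X2 (flat Y)) :
  (forall y, (exists x, f1 x = y) \/ (exists x, f2 x = y)) ->
  (forall y, ~ ((exists x, f1 x = y) /\ (exists x, f2 x = y))) ->
  popen (fun y => exists x, f2 x = y).
Proof.
move=> Hcov Hdis.
apply: (popen_ext (popen_union
   (F := fun W => popen W /\ forall z, W z -> exists x, f2 x = z) _)); first by move=> W [].
move=> y; split; first by case=> W [[_ HW] Wy]; apply: HW.
move=> Hy.
have Hf : forall x, f1 x <> y by move=> x Ex; apply: (Hdis y); split => //; exists x.
have [a [a' [Ha [ay a'y]]]] := sep_image R Hf.
exists (fun z => sval a z = true /\ sval a' z = false); split => //; split.
  exact: (popen_inter (proj2 (proj2_sig a) (fun t => t = true))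
                      (proj2 (proj2_sig a') (fun t => t = false))).
move=> z [az a'z]; case: (Hcov z) => // -[x Ex].
by move: (Ha x); rewrite Ex az a'z.
Qed.

Lemma glue (S : signature) (V : variety S) (C : category) (R : RPD V C)
  (X1 X2 Y : Obj C) (phi1 : Hom X1 Y) (phi2 : Hom X2 Y) :
  ordered_disjoint_union phi1 phi2 ->
  forall a b : P2 (flat Y), exists g : P2 (flat Y),
    (forall x, sval g (flatm phi1 x) = sval a (flatm phi1 x)) /\
    (forall x, sval g (flatm phi2 x) = sval b (flatm phi2 x)).
Proof.
case=> Hcov [Hdis Hinc] a b.
set I1 := fun y => exists x, flatm phi1 x = y.
set I2 := fun y => exists x, flatm phi2 x = y.
have HI2 : popen I2 by apply: (open_part R (f1 := flatm phi1)).
have HI1 : popen I1.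
  apply: (open_part R (f1 := flatm phi2)).
    by move=> y; case: (Hcov y); [right|left].
  by move=> y [h1 h2]; apply: (Hdis y).
pose gf y := if excluded_middle_informative (I1 y) then sval a y else sval b y.
have Hp : is_p2 gf.
  split.
    move=> z z' Hzz'; rewrite /gf.
    case: excluded_middle_informative => H1; case: excluded_middle_informative => H1'.
    - exact: (proj1 (proj2_sig a)).
    - have H2' : I2 z' by case: (Hcov z') => //.
      by case: (Hinc _ _ H1 H2').
    - have H2 : I2 z by case: (Hcov z) => //.
      by case: (Hinc _ _ H1' H2).
    - exact: (proj1 (proj2_sig b)).
  move=> Sp.
  apply: (popen_ext (popen_or (popen_inter HI1 (proj2 (proj2_sig a) Sp))
                              (popen_inter HI2 (proj2 (proj2_sig b) Sp)))).
  move=> z; rewrite /gf; case: excluded_middle_informative => H1.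
    split; first by case=> [][] //; move=> h2; case: (Hdis z).
    by move=> h; left.
  have H2 : I2 z by case: (Hcov z) => //.
  split; first by case=> [][].
  by move=> h; right.
exists (exist _ gf Hp); split => x /=; rewrite /gf; case: excluded_middle_informative => //.
- by move=> H; case: H; exists x.
- by move=> H; case: (Hdis (flatm phi2 x)); split => //; exists x.
Qed.

Lemma part3 (S : signature) (V : variety S) (C : category) (R : RPD V C)
  (X1 X2 Y : Obj C) (phi1 : Hom X1 Y) (phi2 : Hom X2 Y) :
  jointly_P_surj phi1 phi2 ->
     ((exists (B1 : Ealg R X1 -> Prop) (B2 : Ealg R X2 -> Prop),
         is_subalgebra (Ealg R X1) B1 /\ is_subalgebra (Ealg R X2) B2 /\
         (forall p, Bset phi1 phi2 p <-> B1 p.1 /\ B2 p.2))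
      <-> ordered_disjoint_union phi1 phi2).
Proof.
move=> Hj; split.
  case=> B1 [B2 [HB1 [HB2 HBs]]].
  have Hin1 : forall al, B1 (precomp (flatm phi1) al).
    by move=> al; case: (proj1 (HBs (Bmap phi1 phi2 al))) => //; exists al.
  have Hin2 : forall al, B2 (precomp (flatm phi2) al).
    by move=> al; case: (proj1 (HBs (Bmap phi1 phi2 al))) => //; exists al.
  have key : forall a b : P2 (flat Y), exists g : P2 (flat Y),
      (forall x, sval g (flatm phi1 x) = sval a (flatm phi1 x)) /\
      (forall x, sval g (flatm phi2 x) = sval b (flatm phi2 x)).
    move=> a b.
    have [g E] := proj2 (HBs (precomp (flatm phi1) a, precomp (flatm phi2) b)) (conj (Hin1 a) (Hin2 b)).
    case: E => E1 E2; exists g; split => x.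
      by have := f_equal (fun q => q x) E1 => /= ->.
    by have := f_equal (fun q => q x) E2 => /= ->.
  split => //; split.
    move=> y [[x1 E1] [x2 E2]].
    have [g [H1 H2]] := key (constP2 _ true) (constP2 _ false).
    by move: (H1 x1) (H2 x2); rewrite E1 E2 => /= ->.
  move=> y1 y2 [x1 E1] [x2 E2]; split => Hle.
    have [g [H1 H2]] := key (constP2 _ true) (constP2 _ false).
    have := proj1 (proj2_sig g) _ _ Hle.
    by rewrite -E1 -E2 H1 H2 /=; move/(_ erefl).
  have [g [H1 H2]] := key (constP2 _ false) (constP2 _ true).
  have := proj1 (proj2_sig g) _ _ Hle.
  by rewrite -E1 -E2 H1 H2 /=; move/(_ erefl).
move=> Hodu.
exists (fun a => exists al : P2 (flat Y), a = precomp (flatm phi1) al),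
       (fun a => exists al : P2 (flat Y), a = precomp (flatm phi2) al).
split; first exact: image_subalg.
split; first exact: image_subalg.
case=> p1 p2 /=; split.
  by case=> al [-> ->]; split; exists al.
case=> [[a ->] [b ->]].
have [g [H1 H2]] := glue R Hodu a b.
by exists g; congr pair; apply: P2_ext => x /=.
Qed.

Lemma part4a (S : signature) (V : variety S) (C : category) (R : RPD V C)
  (X1 X2 Y : Obj C) (phi1 : Hom X1 Y) (phi2 : Hom X2 Y) :
  jointly_P_surj phi1 phi2 ->
  (injective_partial_map_graph (Bset phi1 phi2) <-> P_surj phi1 /\ P_surj phi2).
Proof.
move=> Hj; split.
  case=> G1 G2; split => y; apply: NNPP => Hn.
    have Hf : forall x, flatm phi1 x <> y by move=> x E; apply: Hn; exists x.
    have [a [a' [Ha [ay a'y]]]] := sep_image R Hf.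
    case: (Hj y) => // -[x2 E2].
    have E1 : precomp (flatm phi1) a = precomp (flatm phi1) a' by apply: P2_ext.
    have := G1 _ _ _ (ex_intro _ a erefl) (ex_intro _ a' (f_equal (fun q => (q, precomp (flatm phi2) a')) E1)).
    move/(f_equal (fun q => sval q x2)) => /=; rewrite E2 ay a'y //.
  have Hf : forall x, flatm phi2 x <> y by move=> x E; apply: Hn; exists x.
  have [a [a' [Ha [ay a'y]]]] := sep_image R Hf.
  case: (Hj y) => // -[x1 E1].
  have E2 : precomp (flatm phi2) a = precomp (flatm phi2) a' by apply: P2_ext.
  have := G2 _ _ _ (ex_intro _ a erefl) (ex_intro _ a' (f_equal (fun q => (precomp (flatm phi1) a', q)) E2)).
  move/(f_equal (fun q => sval q x1)) => /=; rewrite E1 ay a'y //.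
case=> Hs1 Hs2; split.
  move=> a b b' [al E] [al' E']; case: E => Ea ->; case: E' => Ea' ->.
  have -> : al = al'; last done.
  apply: P2_ext => z; have [x <-] := Hs1 z.
  have := f_equal (fun q => sval q x) (etrans (esym Ea) Ea'); by [].
move=> a a' b [al E] [al' E']; case: E => -> E2; case: E' => -> E2'.
have -> : al = al'; last done.
apply: P2_ext => z; have [x <-] := Hs2 z.
have := f_equal (fun q => sval q x) (etrans (esym E2) E2'); by [].
Qed.

Lemma part4b (S : signature) (V : variety S) (C : category) (R : RPD V C)
  (X Y : Obj C) (phi1 phi2 : Hom X Y) :
  jointly_P_surj phi1 phi2 ->
  ((forall p, Bset phi1 phi2 p -> p.1 = p.2) <-> phi1 = phi2).
Proof.
move=> _; split; last by move=> -> p [al ->].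
move=> H; apply: (flat_faithful R) => x; apply: NNPP => Hne.
case: (classic (ple (flatm phi1 x) (flatm phi2 x))) => Hle.
  have Hnle : ~ ple (flatm phi2 x) (flatm phi1 x) by move=> H'; apply: Hne; apply: ple_anti.
  have [U [HU [HnU [Hup [U2 U1]]]]] := psep Hnle.
  have := H _ (ex_intro _ (mk_p2 HU HnU Hup) erefl).
  move/(f_equal (fun q => sval q x)) => /=; by rewrite bdecF // bdecT.
have [U [HU [HnU [Hup [U1 U2]]]]] := psep Hle.
have := H _ (ex_intro _ (mk_p2 HU HnU Hup) erefl).
move/(f_equal (fun q => sval q x)) => /=; by rewrite bdecT // bdecF.
Qed.

Lemma sub_binop (S : signature) (A : algebra S) (B : A -> Prop) (HB : subuniverse B)
  (t : term S) (a b : subalg HB) :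
  sval (bin_op (subalg HB) t a b) = bin_op A t (sval a) (sval b).
Proof.
rewrite /bin_op eval_sub; congr eval; apply: functional_extensionality; by case.
Qed.

Lemma prod_binop (S : signature) (A B : algebra S) (t : term S) (p q : prod_alg A B) :
  bin_op (prod_alg A B) t p q = (bin_op A t p.1 q.1, bin_op B t p.2 q.2).
Proof.
rewrite /bin_op eval_prod; congr pair; congr eval; apply: functional_extensionality; by case.
Qed.

Lemma part2 (S : signature) (V : variety S) (C : category) (R : RPD V C) (X1 X2 : Obj C)
  (B : prod_alg (Ealg R X1) (Ealg R X2) -> Prop)
  (HB : is_subalgebra (prod_alg (Ealg R X1) (Ealg R X2)) B) :
     let Bm := sub_member (Emem R X1) (Emem R X2) B (proj2 HB) in
     let vphi1 := compose (@Dmor S V C R Bm (Emem R X1) (rho1 (proj2 HB)))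
                       (eps R X1) in
     let vphi2 := compose (@Dmor S V C R Bm (Emem R X2) (rho2 (proj2 HB)))
                       (eps R X2) in
     jointly_P_surj vphi1 vphi2 /\ (forall p, B p <-> Bset vphi1 vphi2 p).
Proof.
move=> Bm vphi1 vphi2.
have k1 : forall x (b : Bm), kappa R Bm (flatm vphi1 x) b = sval (sval b).1 x.
  by move=> x b; rewrite /vphi1 flat_comp Dmor_flat; exact: eps_flat.
have k2 : forall x (b : Bm), kappa R Bm (flatm vphi2 x) b = sval (sval b).2 x.
  by move=> x b; rewrite /vphi2 flat_comp Dmor_flat; exact: eps_flat.
split.
  move=> y; apply: NNPP => Hn.
  set h := kappa R Bm y.
  have [Hhm [Hhj [Hhb Hht]]] : bdl_hom V Bm h by apply/kappa_img; exists y.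
  have [a0 Ha0] := proj1 HB.
  pose b0 : Bm := exist _ a0 Ha0.
  pose v := fun _ : nat => b0.
  pose mt (a b : Bm) : Bm := bin_op (malg Bm) (tmeet V) a b.
  pose jn (a b : Bm) : Bm := bin_op (malg Bm) (tjoin V) a b.
  pose tp : Bm := eval (malg Bm) v (ttop V).
  pose bt : Bm := eval (malg Bm) v (tbot V).
  have Etp : sval tp = eval (prod_alg (Ealg R X1) (Ealg R X2)) (fun n => sval (v n)) (ttop V).
    exact: eval_sub.
  have Ebt : sval bt = eval (prod_alg (Ealg R X1) (Ealg R X2)) (fun n => sval (v n)) (tbot V).
    exact: eval_sub.
  have Emt : forall a b, sval (mt a b) = bin_op (prod_alg (Ealg R X1) (Ealg R X2)) (tmeet V) (sval a) (sval b).
    move=> a b; exact: sub_binop.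
  have Ejn : forall a b, sval (jn a b) = bin_op (prod_alg (Ealg R X1) (Ealg R X2)) (tjoin V) (sval a) (sval b).
    move=> a b; exact: sub_binop.
  have cover1 : forall x : flat X1, exists b : Bm, Vc h (fun b x => sval (sval b).1 x) b x.
    move=> x; apply: NNPP => Hx; apply: Hn; left; exists x.
    apply: (kappa_inj _ _ _ R); apply: functional_extensionality => b; rewrite k1.
    apply: NNPP => Hb; apply: Hx; exists b; rewrite /Vc.
    by move: Hb; rewrite -/h; case: (h b); case: (sval (sval b).1 x) => //; auto.
  have cover2 : forall x : flat X2, exists b : Bm, Vc h (fun b x => sval (sval b).2 x) b x.
    move=> x; apply: NNPP => Hx; apply: Hn; right; exists x.
    apply: (kappa_inj _ _ _ R); apply: functional_extensionality => b; rewrite k2.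
    apply: NNPP => Hb; apply: Hx; exists b; rewrite /Vc.
    by move: Hb; rewrite -/h; case: (h b); case: (sval (sval b).2 x) => //; auto.
  have [m1 [j1 [Hm1 [Hj1 H1]]]] := @compact_sep (flat X1) Bm mt jn tp bt h
     (fun b x => sval (sval b).1 x) Hhm Hhj (Hht v) (Hhb v)
     (fun a b x => ltac:(rewrite /= Emt prod_binop /=; exact: E_meet))
     (fun a b x => ltac:(rewrite /= Ejn prod_binop /=; exact: E_join))
     (fun x => ltac:(rewrite /= Etp eval_prod /=; exact: E_top))
     (fun x => ltac:(rewrite /= Ebt eval_prod /=; exact: E_bot))
     (fun b => proj2 (proj2_sig (sval b).1)
        (fun t => (h b = true /\ t = false) \/ (h b = false /\ t = true)))
     cover1.
  have [m2 [j2 [Hm2 [Hj2 H2]]]] := @compact_sep (flat X2) Bm mt jn tp bt h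
     (fun b x => sval (sval b).2 x) Hhm Hhj (Hht v) (Hhb v)
     (fun a b x => ltac:(rewrite /= Emt prod_binop /=; exact: E_meet))
     (fun a b x => ltac:(rewrite /= Ejn prod_binop /=; exact: E_join))
     (fun x => ltac:(rewrite /= Etp eval_prod /=; exact: E_top))
     (fun x => ltac:(rewrite /= Ebt eval_prod /=; exact: E_bot))
     (fun b => proj2 (proj2_sig (sval b).2)
        (fun t => (h b = true /\ t = false) \/ (h b = false /\ t = true)))
     cover2.
  pose M := mt m1 m2. pose J := jn j1 j2.
  have HM : h M = true by rewrite /M Hhm Hm1 Hm2.
  have HJ : h J = false by rewrite /J Hhj Hj1 Hj2.
  have EJ : jn M J = J.
    apply: sig_ext; rewrite Ejn prod_binop.
    rewrite [RHS]surjective_pairing; congr pair; apply: P2_ext => x.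
      rewrite E_join /M /J Emt Ejn !prod_binop /=.
      rewrite !E_meet !E_join.
      by case: (H1 x) => ->; rewrite ?andbF ?orbT.
    rewrite E_join /M /J Emt Ejn !prod_binop /= !E_meet !E_join.
    by case: (H2 x) => ->; rewrite ?andbF ?orbT.
  have := Hhj M J; change (h (jn M J) = h M || h J -> False); by rewrite EJ HM HJ.
move=> [p1 p2]; split.
  move=> Hp; exists (sval (e R Bm) (exist _ (p1, p2) Hp : Bm)).
  congr pair; apply: P2_ext => x /=; rewrite e_flat.
    by rewrite k1.
  by rewrite k2.
case=> al E.
case: (e_bij _ _ _ R Bm) => g Hfg Hgf.
move: E; rewrite -(Hgf al); set b := g al => E.
have -> : (p1, p2) = sval b.
  rewrite E; case Eb: (sval b) => [b1 b2].
  congr pair; apply: P2_ext => x /=; rewrite e_flat.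
    by rewrite k1 Eb.
  by rewrite k2 Eb.
exact: (proj2_sig b).
Qed.

Theorem theorem2p12 (S : signature) (V : variety S) (C : category) (R : RPD V C)
  (X1 X2 : Obj C) :
  (* (1) *)
  (forall (Y : Obj C) (phi1 : Hom X1 Y) (phi2 : Hom X2 Y),
     jointly_P_surj phi1 phi2 ->
     is_subalgebra (prod_alg (Ealg R X1) (Ealg R X2)) (Bset phi1 phi2) /\
     is_hom (Ealg R Y) (prod_alg (Ealg R X1) (Ealg R X2)) (Bmap phi1 phi2) /\
     injective (Bmap phi1 phi2) /\
     (forall p, Bset phi1 phi2 p <-> exists al, Bmap phi1 phi2 al = p)) /\
  (* (2) *)
  (forall (B : prod_alg (Ealg R X1) (Ealg R X2) -> Prop)
          (HB : is_subalgebra (prod_alg (Ealg R X1) (Ealg R X2)) B),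
     let Bm := sub_member (Emem R X1) (Emem R X2) B (proj2 HB) in
     let vphi1 := compose (@Dmor S V C R Bm (Emem R X1) (rho1 (proj2 HB)))
                       (eps R X1) in
     let vphi2 := compose (@Dmor S V C R Bm (Emem R X2) (rho2 (proj2 HB)))
                       (eps R X2) in
     jointly_P_surj vphi1 vphi2 /\ (forall p, B p <-> Bset vphi1 vphi2 p)) /\
  (* (3) *)
  (forall (Y : Obj C) (phi1 : Hom X1 Y) (phi2 : Hom X2 Y),
     jointly_P_surj phi1 phi2 ->
     ((exists (B1 : Ealg R X1 -> Prop) (B2 : Ealg R X2 -> Prop),
         is_subalgebra (Ealg R X1) B1 /\ is_subalgebra (Ealg R X2) B2 /\
         (forall p, Bset phi1 phi2 p <-> B1 p.1 /\ B2 p.2))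
      <-> ordered_disjoint_union phi1 phi2)) /\
  (* (4) *)
  (forall (Y : Obj C) (phi1 : Hom X1 Y) (phi2 : Hom X2 Y),
     jointly_P_surj phi1 phi2 ->
     (injective_partial_map_graph (Bset phi1 phi2) <-> P_surj phi1 /\ P_surj phi2)) /\
  (forall (X Y : Obj C) (phi1 phi2 : Hom X Y),
     jointly_P_surj phi1 phi2 ->
     ((forall p, Bset phi1 phi2 p -> p.1 = p.2) <-> phi1 = phi2)).
Proof.
split; first by move=> Y phi1 phi2; exact: (@part1 S V C R X1 X2 Y phi1 phi2).
split; first by move=> B HB; exact: (@part2 S V C R X1 X2 B HB).
split; first by move=> Y phi1 phi2; exact: (@part3 S V C R X1 X2 Y phi1 phi2).
split; first by move=> Y phi1 phi2; exact: (@part4a S V C R X1 X2 Y phi1 phi2).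
by move=> X Y phi1 phi2; exact: (@part4b S V C R X Y phi1 phi2).
Qed.
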